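(* For all $m\ge0$, $$Q_{m+1}(x)=(2m+1)(2+3x)Q_m(x)-2x(1+x)Q_m'(x),\qquad Q_0(x)=1.$$
   Context: $P_m(x)=\sum_{i=0}^m d_i(m)x^i$ with $d_i(m)=2^{-2m}\sum_{k=i}^m 2^k\binom{2m-2k}{m-k}\binom{m+k}{k}\binom{k}{i}$ (the Boros–Moll polynomials); $Q_m(x)=2^m m!\,x^mP_m(1/x)$. *)

(* Defs.v *)
From mathcomp Require Import all_boot all_order all_algebra.
Set Implicit Arguments. Unset Strict Implicit. Unset Printing Implicit Defensive.
Import Order.TTheory GRing.Theory Num.Theory.
Local Open Scope ring_scope.

Definition bm_d (m i : nat) : rat :=
  (2 ^+ (2 * m))^-1 *
  \sum_(i <= k < m.+1)
     (2 ^ k * 'C(2 * m - 2 * k, m - k) * 'C(m + k, k) * 'C(k, i))%:R.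

Definition bm_P (m : nat) : {poly rat} :=
  \sum_(i < m.+1) bm_d m i *: 'X^i.

(* Q_m(x) = 2^m m! x^m P_m(1/x), written out as a polynomial:
   x^m P_m(1/x) = sum_{i=0}^m d_i(m) x^(m-i). *)
Definition bm_Q (m : nat) : {poly rat} :=
  (2 ^ m * m`!)%:R *: \sum_(i < m.+1) bm_d m i *: 'X^(m - i).

(* Main.v *)
Require Import Defs.
From mathcomp Require Import all_boot all_order all_algebra.
From mathcomp Require Import ring zify.
Set Implicit Arguments. Unset Strict Implicit. Unset Printing Implicit Defensive.
Import Order.TTheory GRing.Theory Num.Theory.
Local Open Scope ring_scope.


Definition G (m k : nat) : rat := (2 ^ k * 'C(2 * m - 2 * k, m - k) * 'C(m + k, k))%:R.

Lemma fnz n : (n`!)%:R != 0 :> rat.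
Proof. by rewrite pnatr_eq0 -lt0n fact_gt0. Qed.

Lemma binr a b c : (b + c = a)%N -> ('C(a, b))%:R = (a`!)%:R / ((b`!)%:R * (c`!)%:R) :> rat.
Proof.
move=> <-; have := bin_fact (leq_addr c b); rewrite addKn => h.
rewrite -h [in RHS]natrM [in RHS]natrM mulfK // mulf_neq0 ?fnz //.
Qed.

Lemma fS n : ((n.+1)`!)%:R = n.+1%:R * (n`!)%:R :> rat.
Proof. by rewrite factS natrM. Qed.

Lemma p1 (x : nat) : 1 + x%:R = x.+1%:R :> rat.
Proof. by rewrite mulrS. Qed.

Lemma Gform n k : G (n + k) k = 2 ^+ k * 'C(n.*2, n)%:R * 'C(n + k.*2, k)%:R.
Proof.
rewrite /G natrM natrM natrX; congr (_ * _%:R * _%:R).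
  congr 'C(_,_); lia. congr 'C(_,_); lia.
Qed.

Lemma Gb n k :
  ((n + k + 2)%:R / 2) * G (n.+1 + k.+1) k.+1 =
  G (n.+1 + k) k * (2 * (n + k + 1) + 2 + 2 * k)%:R
  + G (n + k.+1) k.+1 * (2 * n + 1)%:R.
Proof.
rewrite !Gform.
rewrite (@binr (n.+1).*2 n.+1 n.+1); last lia.
rewrite (@binr (n.+1 + k.+1.*2) k.+1 (n + k).+2); last lia.
rewrite (@binr (n.+1 + k.*2) k (n + k).+1); last lia.
rewrite (@binr n.*2 n n); last lia.
rewrite (@binr (n + k.+1.*2) k.+1 (n+k).+1); last lia.
have e1 : (n.+1).*2 = (n.*2).+2 by lia.
have e2 : (n.+1 + k.+1.*2 = (n + k.*2).+3)%N by lia.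
have e3 : (n.+1 + k.*2 = (n + k.*2).+1)%N by lia.
have e4 : (n + k.+1.*2 = (n + k.*2).+2)%N by lia.
rewrite e1 e2 e3 e4 !fS.
have := fnz n; have := fnz k; have := fnz (n.*2); have := fnz (n + k);
have := fnz (n + k.*2).
set a := (n + k.*2)`!%:R; set b := (n + k)`!%:R; set c := (n.*2)`!%:R;
set d := k`!%:R; set e := n`!%:R.
move=> *. rewrite !exprS -!mul2n !(natrD, natrM, mulrS).
field.
by rewrite -!natrD !p1 !pnatr_eq0 -!lt0n !fact_gt0.
Qed.

Lemma Ga n : ((n + 1)%:R / 2) * G n.+1 0 = G n 0 * (2 * n + 1)%:R.
Proof.
have := Gform n.+1 0; rewrite addn0 => ->.
have := Gform n 0; rewrite addn0 => ->.
rewrite ?addn0 !bin0 (@binr (n.+1).*2 n.+1 n.+1); last lia.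
rewrite (@binr n.*2 n n); last lia.
have e1 : (n.+1).*2 = (n.*2).+2 by lia.
rewrite e1 !fS.
have := fnz n; have := fnz (n.*2).
set c := (n.*2)`!%:R; set e := n`!%:R.
move=> *. rewrite -!mul2n !(natrD, natrM, mulrS).
field.
by rewrite -?natrD ?p1 ?pnatr_eq0 -?lt0n ?fact_gt0.
Qed.

Lemma Gc m : ((m + 1)%:R / 2) * G m.+1 m.+1 = G m m * (4 * m + 2)%:R.
Proof.
have := Gform 0 m.+1; rewrite add0n => ->.
have := Gform 0 m; rewrite add0n => ->.
rewrite !bin0 (@binr (m.+1).*2 m.+1 m.+1); last lia.
rewrite (@binr m.*2 m m); last lia.
have e1 : (m.+1).*2 = (m.*2).+2 by lia.
rewrite e1 !fS.
have := fnz m; have := fnz (m.*2).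
set c := (m.*2)`!%:R; set e := m`!%:R.
move=> *. rewrite !exprS -!mul2n !(natrD, natrM, mulrS).
field.
by rewrite -?natrD ?p1 ?pnatr_eq0 -?lt0n ?fact_gt0.
Qed.




Lemma inner m i :
  \sum_(i <= k < m.+1) (2 ^ k * 'C(2 * m - 2 * k, m - k) * 'C(m + k, k) * 'C(k, i))%:R
  = \sum_(k < m.+1) G m k * 'C(k, i)%:R :> rat.
Proof.
rewrite -(big_mkord xpredT (fun k => G m k * 'C(k, i)%:R)).
case: (leqP i m.+1) => hi.
  rewrite (@big_cat_nat _ _ _ i 0 m.+1 _ _ (leq0n i) hi).
  have -> : \sum_(0 <= k < i) G m k * 'C(k, i)%:R = 0.
    rewrite big_nat big1 // => k /andP [_ hk].
    by rewrite bin_small // mulr0.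
  rewrite Monoid.simpm.
  by apply: eq_bigr => k _; rewrite natrM.
rewrite (big_geq (ltnW hi)) big_nat big1 // => k /andP [_ hk].
by rewrite bin_small ?natr0 ?mulr0 // (leq_trans hk) // ltnW.
Qed.

Lemma binpoly m k : (k <= m)%N ->
  \sum_(i < m.+1) 'C(k, i)%:R *: 'X^(m - i) = 'X^(m - k) * ('X + 1) ^+ k :> {poly rat}.
Proof.
move=> hk.
rewrite exprDn mulr_sumr (big_ord_widen m.+1 (fun i => 'X^(m - k) * ('X ^+ (k - i) * 1 ^+ i *+ 'C(k, i)))) //.
rewrite [RHS]big_mkcond /=; apply: eq_bigr => i _.
case: ifP => hi.
  rewrite expr1n mulr1 mulrnAr -exprD scaler_nat; congr (_ *+ _); congr ('X^_); lia.
by rewrite bin_small ?scale0r // leqNgt hi.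
Qed.

Lemma Qrep m : bm_Q m = ((2 ^ m * m`!)%:R * (2 ^+ (2 * m))^-1) *:
   \sum_(k < m.+1) G m k *: ('X^(m - k) * ('X + 1) ^+ k).
Proof.
rewrite /bm_Q /bm_d -scalerA; congr (_ *: _).
under eq_bigr do rewrite inner -scalerA.
rewrite -[LHS]scaler_sumr; congr (_ *: _).
under eq_bigr do rewrite scaler_suml.
rewrite exchange_big /=; apply: eq_bigr => k _.
under eq_bigr do rewrite -scalerA.
by rewrite -[LHS]scaler_sumr binpoly // -ltnS.
Qed.


Lemma dterm a k : ('X : {poly rat}) * (1 + 'X) * ('X^a * ('X + 1) ^+ k)^`() =
   a%:R *: ('X^a * ('X + 1) ^+ k.+1) + k%:R *: ('X^(a.+1) * ('X + 1) ^+ k) :> {poly rat}.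
Proof.
rewrite derivM derivXn deriv_exp derivD derivX derivC addr0 mul1r !scaler_nat.
case: a => [|a]; case: k => [|k] /=; rewrite ?mulr0n ?mul0r ?add0r ?mulr0 ?addr0 ?exprS; ring.
Qed.

Lemma term m k (G0 : rat) : (k <= m)%N ->
 ((2 * m + 1)%:R * (2%:P + 3%:P * 'X)) * (G0 *: ('X^(m - k) * ('X + 1) ^+ k))
 - (2%:P * 'X * (1 + 'X)) * (G0 *: ('X^(m - k) * ('X + 1) ^+ k))^`()
 = (G0 * (2 * m + 2 + 2 * k)%:R) *: ('X^(m - k) * ('X + 1) ^+ k.+1)
   + (G0 * ((2 * m + 1)%:R - (2 * k)%:R)) *: ('X^((m - k).+1) * ('X + 1) ^+ k).
Proof.
move=> hk; rewrite derivZ.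
have -> : 2%:P * 'X * (1 + 'X) * (G0 *: ('X^(m - k) * ('X + 1) ^+ k)^`()) =
   2%:P * G0%:P * ('X * (1 + 'X) * ('X^(m - k) * ('X + 1) ^+ k)^`()).
  by rewrite -mul_polyC; ring.
rewrite dterm !scaler_nat -!mul_polyC -[_ *+ (m - k)]mulr_natr -[_ *+ k]mulr_natr natrB // !rmorphM !rmorphB /= !polyC_natr.
rewrite !exprS; ring.
Qed.

Lemma cS m : ((2 ^ m.+1 * m.+1`!)%:R * (2 ^+ (2 * m.+1))^-1 : rat) =
   ((2 ^ m * m`!)%:R * (2 ^+ (2 * m))^-1) * ((m + 1)%:R / 2).
Proof.
rewrite mulnS factS !natrM !natrX !exprS.
have := fnz m. set f := m`!%:R => hf.
rewrite addn1; field.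
by rewrite expf_neq0 // pnatr_eq0.
Qed.

Lemma Mid m k : (k < m)%N ->
 ((m + 1)%:R / 2) *: (G m.+1 k.+1 *: ('X^(m.+1 - k.+1) * ('X + 1) ^+ k.+1)) =
 (G m k * (2 * m + 2 + 2 * k)%:R) *: ('X^(m - k) * ('X + 1) ^+ k.+1) +
 (G m k.+1 * ((2 * m + 1)%:R - (2 * k.+1)%:R)) *: ('X^((m - k.+1).+1) * ('X + 1) ^+ k.+1).
Proof.
move=> hk; rewrite subSS (_ : ((m - k.+1).+1 = m - k)%N); last lia.
rewrite !scalerA -scalerDl; congr (_ *: _).
have [n ->] : exists n, m = (n + k.+1)%N by exists (m - k.+1)%N; lia.
have H := Gb n k; rewrite !addSn !addnS in H *.
move: H; move: (G (n + k).+2 k.+1) (G (n + k).+1 k) (G (n + k).+1 k.+1) => x y z H.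
transitivity ((n + k + 0).+2%:R / 2 * x); first by rewrite ?(natrD, natrM); ring.
by rewrite H ?(natrD, natrM); ring.
Qed.

Theorem mainTheorem6 :
  bm_Q 0 = 1 /\
  forall m : nat,
    bm_Q m.+1 =
      ((2 * m + 1)%:R * (2%:P + 3%:P * 'X)) * bm_Q m
      - (2%:P * 'X * (1 + 'X)) * (bm_Q m)^`().
Proof.
split.
  rewrite Qrep big_ord1 /G ?muln0 ?expn0 ?fact0 ?subnn ?mul1n ?addn0 ?bin0 ?expr0 ?invr1 ?mulr1 ?scale1r ?mulr1 //.
move=> m.
rewrite !Qrep derivZ -!scalerAr -scalerBr cS -scalerA; congr (_ *: _).
rewrite [_^`()]raddf_sum !mulr_sumr -sumrB.
under [RHS]eq_bigr => k _ do rewrite (term (G m k) (ltnSE (ltn_ord k))).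
rewrite big_split big_ord_recl big_ord_recr.
rewrite [X in _ = X + _]big_ord_recr [X in _ = _ + X]big_ord_recl /=.
rewrite /bump !leq0n !add1n !subn0 subSS subnn muln0 mulr0n subr0.
have E0 : ((m + 1)%:R / 2) *: (G m.+1 0 *: ('X^(m.+1) * ('X + 1) ^+ 0)) =
  (G m 0 * (2 * m + 1)%:R) *: ('X^(m.+1) * ('X + 1) ^+ 0).
  by rewrite scalerA Ga.
have Em : ((m + 1)%:R / 2) *: (G m.+1 m.+1 *: ('X^0 * ('X + 1) ^+ m.+1)) =
  (G m m * (2 * m + 2 + 2 * m)%:R) *: ('X^0 * ('X + 1) ^+ m.+1).
  by rewrite scalerA Gc; congr (_ * _%:R *: _); lia.
rewrite !scalerDr scaler_sumr E0 Em.
rewrite (eq_bigr (fun i : 'I_m =>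
     (G m i * (2 * m + 2 + 2 * i)%:R) *: ('X^(m - i) * ('X + 1) ^+ i.+1) +
      (G m ((0 <= i) + i) * ((2 * m + 1)%:R - (2 * ((0 <= i) + i))%:R)) *:
      ('X^((m - ((0 <= i) + i)).+1) * ('X + 1) ^+ ((0 <= i) + i)))); last first.
  by move=> i _; exact: Mid (ltn_ord i).
rewrite big_split /=.
ring.
Qed.
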